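(* Let $k,m,n$ be positive integers. For all $X\in M_{m\times n}(R_k)$ and $Y\in M_{n\times m}(R_k)$ we have $\mathfrak{T}_k(XY)=\mathfrak{T}_k(YX)$ in $\mathbb{Z}/k\mathbb{Z}$.
   Context: $\mathbb{N}=\{1,2,3,\dots\}$. $R$ denotes the ring of all $\mathbb{N}\times\mathbb{N}$ integer matrices with only finitely many nonzero entries in each row and each column, with entrywise addition and multiplication $(AB)_{i,j}=\sum_{l\ge1}a_{i,l}b_{l,j}$. Fix a positive integer $k$. Partition $\mathbb{N}$ into consecutive blocks $J_1=\{1\}$ and, for $m\ge2$, $J_m=\{2+k(m-2),\dots,1+k(m-1)\}$. For $A\in R$, the block $A^{m,n}$ is the submatrix with rows indexed by $J_m$ and columns by $J_n$. $R_k$ is the subring of $A\in R$ such that for all but finitely many pairs $(m,n)$ with $m,n\ge2$, $A^{m,n}=cI_k$ for some integer $c$. For a finite square integer matrix $M$, $\operatorname{t}_k(M)\in\mathbb{Z}/k\mathbb{Z}$ is the residue class of the sum of its diagonal entries. For $A\in R_k$, $\operatorname{T}_k(A)=\sum_{n\ge1}\operatorname{t}_k(A^{n,n})\in\mathbb{Z}/k\mathbb{Z}$ (a finite sum). For a square matrix $W\in M_{d\times d}(R_k)$, $\mathfrak{T}_k(W)=\sum_{l=1}^d\operatorname{T}_k(W_{l,l})$. *)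

(* Defs.v *)
From HB Require Import structures.
From mathcomp Require Import all_boot all_order all_algebra.
From Stdlib Require Import ClassicalEpsilon.
Set Implicit Arguments. Unset Strict Implicit. Unset Printing Implicit Defensive.
Import Order.TTheory GRing.Theory Num.Theory.
Local Open Scope ring_scope.

(* An N x N integer matrix, N = {1,2,3,...}.  We use functions nat -> nat -> int;
   index 0 is padding and is required to carry only zero entries (see inR). *)
Definition NMat := nat -> nat -> int.

(* Sum of a finitely supported sequence f : nat -> int, i.e. sum_{l>=0} f l,
   computed as sum_{l < N} f l for a (chosen) N beyond which f vanishes.
   (Only meaningful when f is eventually zero, which is the case where used.) *)
Definition fsum (f : nat -> int) : int :=
  \sum_(l < epsilon (inhabits 0%N) (fun N => forall l, (N <= l)%N -> f l = 0)) f l.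

Definition inR (A : NMat) : Prop :=
  (forall j, A 0%N j = 0) /\ (forall i, A i 0%N = 0) /\
  (forall i, exists N, forall j, (N <= j)%N -> A i j = 0) /\
  (forall j, exists N, forall i, (N <= i)%N -> A i j = 0).

Definition zeroR : NMat := fun _ _ => 0.
Definition addR (A B : NMat) : NMat := fun i j => A i j + B i j.
Definition mulR (A B : NMat) : NMat := fun i j => fsum (fun l => A i l * B l j).

(* Blocks: J_1 = {1}, J_m = {2+k(m-2), ..., 1+k(m-1)} for m >= 2.
   For m, n >= 2, the k x k block A^{m,n}. *)
Definition blockR (k : nat) (A : NMat) (m n : nat) : 'M[int]_k :=
  \matrix_(a < k, b < k) A (2 + k * (m - 2) + a)%N (2 + k * (n - 2) + b)%N.

Definition inRk (k : nat) (A : NMat) : Prop :=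
  inR A /\
  exists s : seq (nat * nat), forall m n, (2 <= m)%N -> (2 <= n)%N ->
    (m, n) \notin s -> exists c : int, blockR k A m n = c%:M.

Definition diag_block_trace (k : nat) (A : NMat) (n : nat) : int :=
  if n == 1%N then A 1%N 1%N else \tr (blockR k A n n).

(* Elements of Z/kZ are represented
   by integers; each term is reduced to its residue in [0,k) so that the sum is
   finitely supported, and the result is to be compared modulo k. *)
Definition Tk (k : nat) (A : NMat) : int :=
  fsum (fun n => if n == 0%N then 0 else (diag_block_trace k A n %% k)%Z).

Definition mxmulR (m n p : nat) (X : 'M[NMat]_(m, n)) (Y : 'M[NMat]_(n, p))
  : 'M[NMat]_(m, p) :=
  \matrix_(i < m, j < p) \big[addR/zeroR]_(l < n) mulR (X i l) (Y l j).

Definition frakTk (k d : nat) (W : 'M[NMat]_d) : int :=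
  \sum_(l < d) Tk k (W l l).

(* Main.v *)
Require Import Defs.
From HB Require Import structures.
From mathcomp Require Import all_boot all_order all_algebra.
From Stdlib Require Import ClassicalEpsilon.
From mathcomp Require Import zify ring.
Set Implicit Arguments. Unset Strict Implicit. Unset Printing Implicit Defensive.
Import Order.TTheory GRing.Theory Num.Theory.
Local Open Scope ring_scope.

Lemma sum_widen (f : nat -> int) L L' : (L <= L')%N ->
  (forall j, (L <= j)%N -> f j = 0) -> \sum_(j < L') f j = \sum_(j < L) f j.
Proof.
move=> hL hf; rewrite -!(big_mkord xpredT) (@big_cat_nat _ _ _ L 0 L' _ _ (leq0n L) hL) /=.
rewrite [X in _ + X]big1_seq ?addr0 // => j /andP[_]; rewrite mem_index_iota => /andP[hj _].
exact: hf.
Qed.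

Lemma fsum_eq (f : nat -> int) L : (forall j, (L <= j)%N -> f j = 0) ->
  fsum f = \sum_(j < L) f j.
Proof.
move=> hf; rewrite /fsum.
have hN := epsilon_spec (inhabits 0%N) (fun N => forall l, (N <= l)%N -> f l = 0) (ex_intro _ L hf).
move: hN; set N := epsilon _ _ => hN.
case: (leqP N L) => h.
  by rewrite (sum_widen h hN).
by rewrite (sum_widen (ltnW h) hf).
Qed.

Lemma big_addR_eval (I : Type) (r : seq I) (P : pred I) (F : I -> NMat) i j :
  (\big[addR/zeroR]_(l <- r | P l) F l) i j = \sum_(l <- r | P l) F l i j.
Proof.
apply: (big_rec2 (fun (A : NMat) (x : int) => A i j = x)) => // l A x _ hA.
by rewrite /addR hA.
Qed.

Lemma reshape k (F : nat -> int) P :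
  \sum_(j < 2 + k * P) F j = F 0%N + F 1%N + \sum_(q < P) \sum_(b < k) F (2 + k * q + b)%N.
Proof.
elim: P => [|P IH].
  by rewrite muln0 big_ord0 addr0 !big_ord_recr big_ord0 /= add0r.
have -> : (2 + k * P.+1 = (2 + k * P) + k)%N by rewrite mulnS; lia.
rewrite big_split_ord /= IH big_ord_recr /= -!addrA; congr (_ + (_ + _)).
Qed.

Lemma pair_block k (A B : NMat) q p (c d : int) :
  blockR k A q.+2 p.+2 = c%:M -> blockR k B p.+2 q.+2 = d%:M ->
  \sum_(a < k) \sum_(b < k) A (2 + k * q + a)%N (2 + k * p + b)%N
      * B (2 + k * p + b)%N (2 + k * q + a)%N = (c * d) *+ k.
Proof.
move=> hA hB.
have eA (a b : 'I_k) : A (2 + k * q + a)%N (2 + k * p + b)%N = (c%:M : 'M[int]_k) a b.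
  by rewrite -hA mxE !subSS !subn0.
have eB (a b : 'I_k) : B (2 + k * p + b)%N (2 + k * q + a)%N = (d%:M : 'M[int]_k) b a.
  by rewrite -hB mxE !subSS !subn0.
rewrite -[k in RHS]card_ord -sumr_const; apply: eq_bigr => a _.
rewrite (bigD1 a) //= big1 ?addr0.
  by rewrite eA eB !mxE eqxx !mulr1n.
by move=> b hb; rewrite eA !mxE eq_sym (negbTE hb) mulr0n mul0r.
Qed.
Lemma common_bound (T : finType) (Q : T -> nat -> Prop) :
  (forall x N N', Q x N -> (N <= N')%N -> Q x N') ->
  (forall x, exists N, Q x N) -> exists N, forall x, Q x N.
Proof.
move=> hmono hex.
suff [N hN] : exists N, forall x, x \in enum T -> Q x N.
  by exists N => x; apply: hN; rewrite mem_enum.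
elim: (enum T) => [|y s [N hN]]; first by exists 0%N.
have [N1 h1] := hex y.
exists (maxn N N1) => x; rewrite inE => /orP[/eqP -> | hx].
  by apply: hmono h1 _; rewrite leq_maxr.
by apply: hmono (hN x hx) _; rewrite leq_maxl.
Qed.

Lemma dvd_big (I : Type) (r : seq I) (P : pred I) (F : I -> int) (k : int) :
  (forall i, P i -> (k %| F i)%Z) -> (k %| \sum_(i <- r | P i) F i)%Z.
Proof.
move=> h; apply: (big_ind (fun x : int => (k %| x)%Z)) => //.
by move=> x y hx hy; apply: rpredD.
Qed.

Lemma cross_dvd k (A B : NMat) M P :
  (forall j, A 0%N j = 0) -> (forall j, (2 + k * M <= j)%N -> B j 1%N = 0) ->
  (forall q p, (q < M)%N -> (M <= p)%N -> exists c d,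
      blockR k A q.+2 p.+2 = c%:M /\ blockR k B p.+2 q.+2 = d%:M) ->
  (k%:Z %| \sum_(i < 2 + k * M) \sum_(M <= p < P) \sum_(b < k)
       A i (2 + k * p + b)%N * B (2 + k * p + b)%N i)%Z.
Proof.
move=> h0 h1 hb.
rewrite (reshape k (fun i => \sum_(M <= p < P) \sum_(b < k) A i (2 + k * p + b)%N * B (2 + k * p + b)%N i)).
rewrite big1 ?add0r; last first.
  by move=> p _; rewrite big1 // => b _; rewrite h0 mul0r.
rewrite big_nat_cond big1 ?add0r; last first.
  move=> p /andP[/andP[hp _] _]; rewrite big1 // => b _; rewrite h1 ?mulr0 //.
  by rewrite (leq_trans _ (leq_addr b _)) // leq_add2l leq_mul2l hp orbT.
apply: dvd_big => q _; rewrite exchange_big /= big_nat_cond.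
apply: dvd_big => p /andP[/andP[hp _] _].
have [c [d [hc hd]]] := hb q p (ltn_ord q) hp.
rewrite (pair_block hc hd).
by rewrite -mulr_natr natz; exact: dvdz_mull (dvdzz _).
Qed.

Lemma diag_dvd k n (Xs Ys : 'I_n -> NMat) q M : (0 < k)%N ->
  (M <= q)%N ->
  (forall l i, Xs l i 0%N = 0) ->
  (forall l i, (2 + k * M <= i)%N -> Xs l i 1%N = 0) ->
  (forall l i, exists N, forall j, (N <= j)%N -> Xs l i j = 0) ->
  (forall l p, exists c d, blockR k (Xs l) q.+2 p.+2 = c%:M /\
                           blockR k (Ys l) p.+2 q.+2 = d%:M) ->
  (k%:Z %| \sum_(a < k) \sum_(l < n)
      fsum (fun j => Xs l (2 + k * q + a)%N j * Ys l j (2 + k * q + a)%N))%Z.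
Proof.
move=> hk hMq h0 h1 hrow hb.
rewrite exchange_big; apply: dvd_big => l _.
pose F (a : 'I_k) (j : nat) := Xs l (2 + k * q + a)%N j * Ys l j (2 + k * q + a)%N.
have [P hP] : exists P, forall a : 'I_k, forall j, (2 + k * P <= j)%N ->
    Xs l (2 + k * q + a)%N j = 0.
  apply: (common_bound (Q := fun (a : 'I_k) P => forall j, (2 + k * P <= j)%N ->
              Xs l (2 + k * q + a)%N j = 0)).
    move=> a N N' h hN j hj; apply: h; apply: leq_trans hj.
    by rewrite leq_add2l leq_mul2l hN orbT.
  move=> a; have [N hN] := hrow l (2 + k * q + a)%N; exists N => j hj.
  by apply: hN; apply: leq_trans hj; nia.
rewrite (eq_bigr (fun a : 'I_k => \sum_(p < P) \sum_(b < k) F a (2 + k * p + b)%N)); last first.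
  move=> a _; rewrite (fsum_eq (L := (2 + k * P)%N)); last first.
    by move=> j hj; rewrite hP ?mul0r.
  rewrite (reshape k (F a)) /F h0 h1 ?mul0r ?add0r //.
  by rewrite -addnA leq_add2l (leq_trans _ (leq_addr a _)) // leq_mul2l hMq orbT.
rewrite exchange_big; apply: dvd_big => p _.
have [c [d [hc hd]]] := hb l p.
rewrite /F (pair_block hc hd).
by rewrite -mulr_natr natz; exact: dvdz_mull (dvdzz _).
Qed.

Lemma mod_sub_dvd (x : int) (k : nat) : (k%:Z %| (x %% k)%Z - x)%Z.
Proof.
have e : (x %% k)%Z - x = - ((x %/ k)%Z * k%:Z).
  by rewrite {2}(divz_eq x k) opprD addrCA subrr addr0.
by rewrite e rpredN; exact: dvdz_mull (dvdzz _).
Qed.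

Lemma Tk_congr k (W : NMat) M :
  W 0%N 0%N = 0 ->
  (forall q, (M <= q)%N -> (k%:Z %| \tr (blockR k W q.+2 q.+2))%Z) ->
  (k%:Z %| Tk k W - \sum_(i < 2 + k * M) W i i)%Z.
Proof.
move=> hW0 hd.
pose h n := if n == 0%N then 0 else diag_block_trace k W n.
rewrite /Tk (fsum_eq (L := M.+2)); last first.
  move=> n; case: n => // [[//|q]] hq /=.
  by rewrite /diag_block_trace /=; apply/dvdz_mod0P; apply: hd.
have eh : \sum_(i < 2 + k * M) W i i = \sum_(n < M.+2) h n.
  rewrite (reshape k (fun i => W i i)) -(big_mkord xpredT) !big_nat_recl //.
  rewrite /h /= hW0 !add0r; congr (_ + _).
  rewrite big_mkord; apply: eq_bigr => q _.
  rewrite /diag_block_trace /= /mxtrace; apply: eq_bigr => a _.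
  by rewrite mxE !subSS subn0.
rewrite eh -sumrB; apply: dvd_big => n _; rewrite /h.
case: (n == 0%N :> nat); first by rewrite subrr dvdz0.
exact: mod_sub_dvd.
Qed.

Lemma split_sum k M P (F : nat -> int) : (M <= P)%N ->
  \sum_(j < 2 + k * P) F j = \sum_(j < 2 + k * M) F j +
     \sum_(M <= p < P) \sum_(b < k) F (2 + k * p + b)%N.
Proof.
move=> hMP; rewrite !reshape.
rewrite -!(big_mkord xpredT (fun q => \sum_(b < k) F (2 + k * q + b)%N)).
by rewrite (@big_cat_nat _ _ _ M 0 P _ _ (leq0n M) hMP) /= !addrA.
Qed.

Definition Ssum k M P (A B : NMat) : int :=
  \sum_(i < 2 + k * M) \sum_(j < 2 + k * P) A i j * B j i.

Lemma S_swap k M P (A B : NMat) : (M <= P)%N ->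
  (forall j, A 0%N j = 0) -> (forall j, B 0%N j = 0) ->
  (forall j, (2 + k * M <= j)%N -> A j 1%N = 0) ->
  (forall j, (2 + k * M <= j)%N -> B j 1%N = 0) ->
  (forall q p, (q < M)%N -> (M <= p)%N -> exists c d,
      blockR k A q.+2 p.+2 = c%:M /\ blockR k B p.+2 q.+2 = d%:M) ->
  (forall q p, (q < M)%N -> (M <= p)%N -> exists c d,
      blockR k B q.+2 p.+2 = c%:M /\ blockR k A p.+2 q.+2 = d%:M) ->
  (k%:Z %| Ssum k M P A B - Ssum k M P B A)%Z.
Proof.
move=> hMP hA0 hB0 hA1 hB1 hAB hBA; rewrite /Ssum.
rewrite (eq_bigr (fun i : 'I_(2 + k * M) => \sum_(j < 2 + k * M) A i j * B j i +
   \sum_(M <= p < P) \sum_(b < k) A i (2 + k * p + b)%N * B (2 + k * p + b)%N i)); last first.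
  by move=> i _; rewrite (split_sum _ (fun j => A i j * B j i) hMP).
rewrite [X in _ - X](eq_bigr (fun i : 'I_(2 + k * M) => \sum_(j < 2 + k * M) B i j * A j i +
   \sum_(M <= p < P) \sum_(b < k) B i (2 + k * p + b)%N * A (2 + k * p + b)%N i)); last first.
  by move=> i _; rewrite (split_sum _ (fun j => B i j * A j i) hMP).
rewrite !big_split /=.
have -> : \sum_(i < 2 + k * M) \sum_(j < 2 + k * M) B i j * A j i =
          \sum_(i < 2 + k * M) \sum_(j < 2 + k * M) A i j * B j i.
  by rewrite exchange_big; apply: eq_bigr => i _; apply: eq_bigr => j _; rewrite mulrC.
rewrite opprD addrACA subrr add0r.
by apply: rpredB; apply: cross_dvd.
Qed.

Definition good k M P (A : NMat) : Prop :=
  (forall j, A 0%N j = 0) /\ (forall i, A i 0%N = 0) /\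
      (forall i, exists N, forall j, (N <= j)%N -> A i j = 0) /\
      (forall i, (i < 2 + k * M)%N -> forall j, (2 + k * P <= j)%N -> A i j = 0) /\
      (forall i, (2 + k * M <= i)%N -> A i 1%N = 0) /\
      (forall q p, (M <= q)%N \/ (M <= p)%N -> exists c, blockR k A q.+2 p.+2 = c%:M).

Lemma frak_congr k m n (X : 'M[NMat]_(m, n)) (Y : 'M[NMat]_(n, m)) M P :
  (0 < k)%N ->
  (forall u l, good k M P (X u l)) -> (forall l u, good k M P (Y l u)) ->
  (k%:Z %| frakTk k (mxmulR X Y) - \sum_(u < m) \sum_(l < n) Ssum k M P (X u l) (Y l u))%Z.
Proof.
move=> hk hX hY; rewrite /frakTk -sumrB; apply: dvd_big => u _.
have hW : forall i j, mxmulR X Y u u i j = \sum_(l < n) fsum (fun t => X u l i t * Y l u t j).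
  by move=> i j; rewrite /mxmulR mxE big_addR_eval.
have eS : \sum_(l < n) Ssum k M P (X u l) (Y l u) =
          \sum_(i < 2 + k * M) mxmulR X Y u u i i.
  rewrite /Ssum exchange_big; apply: eq_bigr => i _; rewrite hW; apply: eq_bigr => l _.
  rewrite (fsum_eq (L := (2 + k * P)%N)) // => j hj.
  by have [_ [_ [_ [hL [_ _]]]]] := hX u l; rewrite hL ?mul0r.
rewrite eS; apply: Tk_congr.
  rewrite hW big1 // => l _; rewrite (fsum_eq (L := 0%N)) ?big_ord0 // => j _.
  by have [h0 [_ [_ [_ [_ _]]]]] := hX u l; rewrite h0 mul0r.
move=> q hq; rewrite /mxtrace.
rewrite (eq_bigr (fun a : 'I_k => \sum_(l < n)
   fsum (fun t => X u l (2 + k * q + a)%N t * Y l u t (2 + k * q + a)%N))); last first.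
  by move=> a _; rewrite mxE !subSS subn0 hW.
apply: (@diag_dvd k n (fun l => X u l) (fun l => Y l u) q M) => //=.
- by move=> l i; have [_ [h [_ [_ [_ _]]]]] := hX u l; apply: h.
- by move=> l i hi; have [_ [_ [_ [_ [h _]]]]] := hX u l; apply: h.
- by move=> l i; have [_ [_ [h [_ [_ _]]]]] := hX u l; apply: h.
move=> l p.
have [_ [_ [_ [_ [_ hbX]]]]] := hX u l; have [_ [_ [_ [_ [_ hbY]]]]] := hY l u.
have [c hc] := hbX q p (or_introl hq); have [d hd] := hbY p q (or_intror hq).
by exists c, d.
Qed.

Lemma ex_M k (A : NMat) : (0 < k)%N -> inRk k A -> exists M,
  (forall i, (2 + k * M <= i)%N -> A i 1%N = 0) /\
  (forall q p, (M <= q)%N \/ (M <= p)%N -> exists c, blockR k A q.+2 p.+2 = c%:M).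
Proof.
move=> hk [[_ [_ [_ hcol]]] [s hs]].
have [N0 hN0] := hcol 1%N.
set B := \max_(e <- s) maxn e.1 e.2.
exists (maxn N0 B); split.
  move=> i hi; apply: hN0; apply: leq_trans hi.
  have := leq_maxl N0 B; nia.
move=> q p hqp; apply: hs => //; apply/negP => hin.
have := @leq_bigmax_seq _ s xpredT (fun e : nat * nat => maxn e.1 e.2) _ hin isT.
rewrite -/B /= => hb; have := leq_maxr N0 B.
case: hqp => h; lia.
Qed.

Lemma ex_P k (A : NMat) i M : (0 < k)%N -> inR A -> exists P,
  (M <= P)%N /\ forall j, (2 + k * P <= j)%N -> A i j = 0.
Proof.
move=> hk [_ [_ [hrow _]]]; have [N0 hN0] := hrow i.
exists (maxn M N0); split; first exact: leq_maxl.
move=> j hj; apply: hN0; apply: leq_trans hj; have := leq_maxr M N0; nia.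
Qed.

Theorem mainTheorem7 (k m n : nat) (hk : (0 < k)%N) (hm : (0 < m)%N) (hn : (0 < n)%N)
  (X : 'M[NMat]_(m, n)) (Y : 'M[NMat]_(n, m))
  (hX : forall i j, inRk k (X i j)) (hY : forall i j, inRk k (Y i j)) :
  (frakTk k (mxmulR X Y) = frakTk k (mxmulR Y X) %[mod k])%Z.
Proof.
pose QM (A : NMat) M := (forall i, (2 + k * M <= i)%N -> A i 1%N = 0) /\
  (forall q p, (M <= q)%N \/ (M <= p)%N -> exists c, blockR k A q.+2 p.+2 = c%:M).
have monoM : forall A N N', QM A N -> (N <= N')%N -> QM A N'.
  move=> A N N' [h1 h2] hN; split.
    by move=> i hi; apply: h1; apply: leq_trans hi; rewrite leq_add2l leq_mul2l hN orbT.
  move=> q p hqp; apply: h2; case: hqp => h; [left|right]; exact: leq_trans hN h.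
have [M1 hM1] := @common_bound _ (fun (x : 'I_m * 'I_n) M => QM (X x.1 x.2) M)
  (fun x => monoM (X x.1 x.2)) (fun x => ex_M hk (hX x.1 x.2)).
have [M2 hM2] := @common_bound _ (fun (x : 'I_n * 'I_m) M => QM (Y x.1 x.2) M)
  (fun x => monoM (Y x.1 x.2)) (fun x => ex_M hk (hY x.1 x.2)).
pose M := maxn M1 M2.
have hMX u l : QM (X u l) M by apply: monoM (hM1 (u, l)) _; exact: leq_maxl.
have hMY l u : QM (Y l u) M by apply: monoM (hM2 (l, u)) _; exact: leq_maxr.
pose QP (A : NMat) (i : nat) P := (M <= P)%N /\ forall j, (2 + k * P <= j)%N -> A i j = 0.
have monoP : forall A i N N', QP A i N -> (N <= N')%N -> QP A i N'.
  move=> A i N N' [h1 h2] hN; split; first exact: leq_trans hN.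
  by move=> j hj; apply: h2; apply: leq_trans hj; rewrite leq_add2l leq_mul2l hN orbT.
have [P1 hP1] := @common_bound _
  (fun (x : ('I_m * 'I_n) * 'I_(2 + k * M)) P => QP (X x.1.1 x.1.2) x.2 P)
  (fun x => monoP (X x.1.1 x.1.2) x.2) (fun x => ex_P x.2 M hk (proj1 (hX x.1.1 x.1.2))).
have [P2 hP2] := @common_bound _
  (fun (x : ('I_n * 'I_m) * 'I_(2 + k * M)) P => QP (Y x.1.1 x.1.2) x.2 P)
  (fun x => monoP (Y x.1.1 x.1.2) x.2) (fun x => ex_P x.2 M hk (proj1 (hY x.1.1 x.1.2))).
pose P := maxn M (maxn P1 P2).
have hMP : (M <= P)%N by exact: leq_maxl.
have hgX u l : good k M P (X u l).
  have [[h0 [h0' [hr _]]] _] := hX u l; have [hc hb] := hMX u l.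
  do 5?split => //.
  move=> i hi j hj; have [_ h] := hP1 ((u, l), Ordinal hi); apply: h.
  by apply: leq_trans hj; rewrite leq_add2l leq_mul2l; have := leq_maxr M (maxn P1 P2);
    have := leq_maxl P1 P2; lia.
have hgY l u : good k M P (Y l u).
  have [[h0 [h0' [hr _]]] _] := hY l u; have [hc hb] := hMY l u.
  do 5?split => //.
  move=> i hi j hj; have [_ h] := hP2 ((l, u), Ordinal hi); apply: h.
  by apply: leq_trans hj; rewrite leq_add2l leq_mul2l; have := leq_maxr M (maxn P1 P2);
    have := leq_maxr P1 P2; lia.
apply/eqP; rewrite eqz_mod_dvd.
have h1 := frak_congr hk hgX hgY.
have h2 := frak_congr hk hgY hgX.
have h3 : (k%:Z %| \sum_(u < m) \sum_(l < n) Ssum k M P (X u l) (Y l u) -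
     \sum_(l < n) \sum_(u < m) Ssum k M P (Y l u) (X u l))%Z.
  rewrite [X in _ - X]exchange_big -sumrB; apply: dvd_big => u _.
  rewrite -sumrB; apply: dvd_big => l _.
  have [a0 [_ [_ [_ [a1 ab]]]]] := hgX u l.
  have [b0 [_ [_ [_ [b1 bb]]]]] := hgY l u.
  apply: S_swap => //.
    move=> q p hq hp; have [c hc] := ab q p (or_intror hp); have [d hd] := bb p q (or_introl hp).
    by exists c, d.
  move=> q p hq hp; have [c hc] := bb q p (or_intror hp); have [d hd] := ab p q (or_introl hp).
  by exists c, d.
move: h1 h2 h3.
set a := frakTk _ _; set b := frakTk _ _; set s1 := \sum_(u < m) _; set s2 := \sum_(l < n) _.
move=> h1 h2 h3.
have -> : a - b = (a - s1) - (b - s2) + (s1 - s2).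
  by ring.
by apply: rpredD => //; apply: rpredB.
Qed.
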